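(* Let $\mathcal{F}_{2P_2}$ and $\mathcal{F}_{P_5}$ be as defined in the context. Then $\{C_7,C_9,C_{11},\ldots\}\subsetneq\mathcal{F}_{2P_2}$ and $\{C_7,C_9,C_{11},\ldots\}\subsetneq\mathcal{F}_{P_5}$. In particular, both $\mathcal{F}_{2P_2}$ and $\mathcal{F}_{P_5}$ are infinite.
   Context: All graphs are finite and simple. $C_n$ is the cycle on $n$ vertices, $P_5$ the path on $5$ vertices, and $2P_2$ the disjoint union of two edges. A graph is $H$-free if it has no induced subgraph isomorphic to $H$; for a set $\mathcal{F}$ of graphs, a graph is $\mathcal{F}$-free if it is $H$-free for every $H\in\mathcal{F}$. A graph $G=(V,E)$ is probe $H$-free if there is an independent set $N$ of $G$ and a set $F\subseteq\binom{N}{2}$ such that $(V,E\cup F)$ is $H$-free. The class of probe $H$-free graphs is closed under vertex deletion, so there is a unique minimal set of graphs $\mathcal{F}_H$ (up to isomorphism) such that a graph is probe $H$-free if and only if it is $\mathcal{F}_H$-free (equivalently, $\mathcal{F}_H$ is the set of minimal forbidden induced subgraphs: graphs that are not probe $H$-free but all of whose proper induced subgraphs are). *)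

(* Defs.v *)
From mathcomp Require Import all_boot.
Set Implicit Arguments. Unset Strict Implicit. Unset Printing Implicit Defensive.

Record sgraph := SGraph {
  vert : finType;
  adj : rel vert;
  adj_sym : symmetric adj;
  adj_irr : irreflexive adj }.

Definition induced_in (H : sgraph) (V : finType) (e : rel V) : Prop :=
  exists f : vert H -> V, injective f /\ forall x y, adj x y = e (f x) (f y).

Definition H_free (H : sgraph) (V : finType) (e : rel V) : Prop :=
  ~ @induced_in H V e.

Definition probe_free (H : sgraph) (V : finType) (e : rel V) : Prop :=
  exists (N : {set V}) (F : rel V),
    (forall x y, x \in N -> y \in N -> ~~ e x y) /\
    symmetric F /\
    (forall x y, F x y -> [/\ x \in N, y \in N & x != y]) /\
    @H_free H V (fun x y => e x y || F x y).

Definition sub_rel (V : finType) (e : rel V) (S : {set V}) : rel {x : V | x \in S} :=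
  fun x y => e (val x) (val y).

Definition in_FH (H G : sgraph) : Prop :=
  ~ @probe_free H (vert G) (@adj G) /\
  forall S : {set vert G}, S \proper [set: vert G] ->
    @probe_free H {x : vert G | x \in S} (@sub_rel (vert G) (@adj G) S).

Definition isomorphic (G1 G2 : sgraph) : Prop :=
  exists f : vert G1 -> vert G2, bijective f /\ forall x y, adj x y = adj (f x) (f y).

#[global] Arguments H_free : clear implicits.
#[global] Arguments probe_free : clear implicits.
Definition cycle_rel (n : nat) : rel 'I_n :=
  fun (i j : 'I_n) => (i != j) && ((j == (i.+1 %% n) :> nat) || (i == (j.+1 %% n) :> nat)).

Arguments cycle_rel : clear implicits.

Lemma cycle_sym (n : nat) : symmetric (cycle_rel n).
Proof. by move=> i j; rewrite /cycle_rel eq_sym orbC. Qed.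

Lemma cycle_irr (n : nat) : irreflexive (cycle_rel n).
Proof. by move=> i; rewrite /cycle_rel eqxx. Qed.

Definition cycle_graph (n : nat) : sgraph := SGraph (@cycle_sym n) (@cycle_irr n).

Definition p5_rel : rel 'I_5 := fun i j => (j == i.+1 :> nat) || (i == j.+1 :> nat).

Lemma p5_sym : symmetric p5_rel.
Proof. by move=> i j; rewrite /p5_rel orbC. Qed.

Lemma p5_irr : irreflexive p5_rel.
Proof. move=> i; rewrite /p5_rel; apply/negP => /orP [] /eqP /esym/eqP; by rewrite eqn_leq ltnn. Qed.

Definition P5 : sgraph := SGraph p5_sym p5_irr.

(* 2P2 on 'I_4 with edges {0,1} and {2,3}. *)
Definition twoP2_rel : rel 'I_4 := fun i j => (i != j) && ((i : nat)./2 == (j : nat)./2).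

Lemma twoP2_sym : symmetric twoP2_rel.
Proof. by move=> i j; rewrite /twoP2_rel eq_sym [_./2 == _]eq_sym. Qed.

Lemma twoP2_irr : irreflexive twoP2_rel.
Proof. by move=> i; rewrite /twoP2_rel eqxx. Qed.

Definition twoP2 : sgraph := SGraph twoP2_sym twoP2_irr.

(* Main.v *)
Require Import Defs.
From mathcomp Require Import all_boot zify.
Set Implicit Arguments. Unset Strict Implicit. Unset Printing Implicit Defensive.


Fixpoint allseqs (T : Type) (l : seq T) (h : nat) : seq (seq T) :=
  if h is h'.+1 then flatten [seq [seq x :: s | s <- allseqs l h'] | x <- l] else [:: [::]].

Lemma mem_allseqs (T : eqType) (l : seq T) h s :
  all (mem l) s -> size s = h -> s \in allseqs l h.
Proof.
elim: h s => [|h IH] [|x s] //= /andP[xl sl] [sz].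
apply/flattenP; exists [seq x :: s | s <- allseqs l h]; first exact: map_f.
by apply: map_f; apply: IH.
Qed.

Lemma allseqs_mem (T : eqType) (l : seq T) h s : s \in allseqs l h -> size s = h /\ all (mem l) s.
Proof.
elim: h s => [|h IH] s /=; first by rewrite inE => /eqP ->.
case/flattenP=> t /mapP[x xl ->] /mapP[u /IH [<- ul] ->] /=; by rewrite xl ul.
Qed.

Fixpoint injseqs (l : seq nat) (h : nat) : seq (seq nat) :=
  if h is h'.+1 then flatten [seq [seq x :: s | s <- injseqs (filter (fun y => ~~ eqn x y) l) h'] | x <- l]
  else [:: [::]].

Lemma mem_injseqs l h s : uniq s -> all (mem l) s -> size s = h -> s \in injseqs l h.
Proof.
elim: h l s => [|h IH] l [|x s] //= /andP[xs us] /andP[xl sl] [sz].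
apply/flattenP; exists [seq x :: s | s <- injseqs (filter (fun y => ~~ eqn x y) l) h]; first exact: map_f.
apply: map_f; apply: IH => //; apply/allP=> y ys /=; rewrite mem_filter.
have yl : y \in l by exact: (allP sl y ys).
rewrite yl andbT.
by apply: contraNN xs => /eqnP ->.
Qed.

Lemma injseqs_mem l h s : s \in injseqs l h -> [/\ size s = h, uniq s & all (mem l) s].
Proof.
elim: h l s => [|h IH] l s /=; first by rewrite inE => /eqP ->.
case/flattenP=> t /mapP[x xl ->] /mapP[u /IH [<- uu ul] ->] /=; split=> //.
  rewrite uu andbT; apply/negP=> /(allP ul); rewrite /= mem_filter => /andP[].
  by rewrite eqnE eqxx.
rewrite xl /=; apply/allP=> y /(allP ul); rewrite /= mem_filter => /andP[_ ->] //.
Qed.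

Definition beq (a b : bool) := if a then b else ~~ b.
Lemma beqE a b : beq a b = (a == b). Proof. by case: a; case: b. Qed.

Lemma iota_ord k (i : 'I_k) : val i \in iota 0 k.
Proof. by rewrite mem_iota /= add0n ltn_ord. Qed.

Definition indepN k (eN : rel nat) (nb : pred nat) :=
  all (fun x => all (fun y => ~~ [&& nb x, nb y & eN x y]) (iota 0 k)) (iota 0 k).

Definition goodN h (aN eN : rel nat) (nb : pred nat) (s : seq nat) :=
  all (fun i => all (fun j =>
     beq (aN i j) (eN (nth 0 s i) (nth 0 s j)) &&
     [|| aN i j, eqn i j, ~~ nb (nth 0 s i) | ~~ nb (nth 0 s j)]) (iota 0 h)) (iota 0 h).

Definition notprobeN h k (aN eN : rel nat) (cands : seq (seq nat)) :=
  all (fun s => s \in injseqs (iota 0 k) h) cands &&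
  all (fun bs : seq bool => let nb := fun x => nth false bs x in
     ~~ indepN k eN nb || has (goodN h aN eN nb) cands)
   (allseqs [:: true; false] k).

Lemma notprobe_fixed h (a : rel 'I_h) (as_ : symmetric a) (ai : irreflexive a) k (e : rel 'I_k.+1)
   (aN eN : rel nat) cands :
  (forall i j : 'I_h, a i j = aN i j) -> (forall x y : 'I_k.+1, e x y = eN x y) ->
  notprobeN h k.+1 aN eN cands -> ~ probe_free (SGraph as_ ai) 'I_k.+1 e.
Proof.
move=> aE eE /andP[/allP cin /allP chk] [N [F [Ni [Fs [FN Hf]]]]]; apply: Hf.
pose bs := [seq x \in N | x <- enum 'I_k.+1].
have nbs (x : 'I_k.+1) : nth false bs x = (x \in N).
  by rewrite (nth_map ord0) ?size_enum_ord ?ltn_ord // nth_ord_enum.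
have bsin : bs \in allseqs [:: true; false] k.+1.
  apply: mem_allseqs; last by rewrite size_map size_enum_ord.
  by apply/allP=> b _; case: b.
have /orP[] := chk bs bsin.
  case/negP; apply/allP=> x; rewrite mem_iota add0n => /andP[_ xk].
  apply/allP=> y; rewrite mem_iota add0n => /andP[_ yk].
  have -> : x = val (Ordinal xk) by [].
  have -> : y = val (Ordinal yk) by [].
  rewrite !nbs -eE.
  apply/negP=> /and3P[xN yN exy]; by move: (Ni _ _ xN yN); rewrite exy.
case/hasP=> s sin /allP gs.
have [sz us /allP sk] := injseqs_mem (cin s sin).
have nthk (i : 'I_h) : nth 0 s i < k.+1.
  have : nth 0 s i \in s by apply: mem_nth; rewrite sz ltn_ord.
  move/sk => H; have : nth 0 s i \in iota 0 k.+1 by exact: H.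
  by rewrite mem_iota add0n.
exists (fun i : 'I_h => inord (nth 0 s i)); split.
  move=> i j /(congr1 val); rewrite /= !inordK // => /eqP.
  rewrite nth_uniq ?sz ?ltn_ord // => /eqP; exact: val_inj.
move=> i j /=.
have /allP gsi := gs i (iota_ord i).
have /andP[aij c] := gsi j (iota_ord j).
move: aij; rewrite beqE => /eqP aij.
rewrite aE eE !inordK // -aij.
case Fv: (F _ _); last by rewrite orbF.
have [xN yN xy] := FN _ _ Fv.
rewrite orbT; move: c => /=.
have -> : nth 0 s i = val (inord (nth 0 s i) : 'I_k.+1) by rewrite /= inordK.
have -> : nth 0 s j = val (inord (nth 0 s j) : 'I_k.+1) by rewrite /= inordK.
rewrite !nbs xN yN /= !orbF.
case/orP => // /eqnP ij; have ij' : i = j by apply: val_inj.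
subst j; by rewrite eqxx in xy.
Qed.

Definition minimalN h k (aN eN : rel nat) (v : nat) (nb : pred nat) (F : rel nat) : bool :=
 [&& indepN k eN nb,
     all (fun x => all (fun y => beq (F x y) (F y x) && (~~ F x y || [&& nb x, nb y & ~~ eqn x y]))
       (iota 0 k)) (iota 0 k) &
     all (fun s => ~~ all (fun i => all (fun j => beq (aN i j) (eN (nth 0 s i) (nth 0 s j) || F (nth 0 s i) (nth 0 s j)))
          (iota 0 h)) (iota 0 h)) (injseqs (filter (fun x => ~~ eqn x v) (iota 0 k)) h)].

Lemma minimal_fixed h (a : rel 'I_h) (as_ : symmetric a) (ai : irreflexive a) k (e : rel 'I_k.+1)
   (aN eN : rel nat) (v : 'I_k.+1) nb F (S : {set 'I_k.+1}) :
  (forall i j : 'I_h, a i j = aN i j) -> (forall x y : 'I_k.+1, e x y = eN x y) ->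
  v \notin S -> minimalN h k.+1 aN eN v nb F ->
  probe_free (SGraph as_ ai) {x : 'I_k.+1 | x \in S} (@sub_rel 'I_k.+1 e S).
Proof.
move=> aE eE vS /and3P[/allP ind /allP fc /allP chk].
exists [set y : {x : 'I_k.+1 | x \in S} | nb (val (val y))].
exists (fun x y => F (val (val x)) (val (val y))).
have fcxy (x y : 'I_k.+1) : (F x y == F y x) && (~~ F x y || [&& nb x, nb y & x != y :> nat]).
  have /allP := fc x (iota_ord x); move/(_ _ (iota_ord y)).
  by rewrite beqE.
split; [|split; [|split]].
- move=> x y; rewrite !inE => xN yN /=; rewrite /sub_rel eE.
  have /allP := ind _ (iota_ord (val x)).
  by move/(_ _ (iota_ord (val y))); rewrite xN yN.
- by move=> x y; have /andP[/eqP -> _] := fcxy (val x) (val y).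
- move=> x y Fxy; have /andP[_] := fcxy (val x) (val y); rewrite Fxy /= => /and3P[xN yN xy].
  rewrite !inE xN yN; split=> //; apply: contraNneq xy => -> //.
- case=> f [finj fadj].
  pose s := [seq val (val (f i)) | i <- enum 'I_h].
  have nths (i : 'I_h) : nth 0 s i = val (val (f i)).
    by rewrite (nth_map i) ?size_enum_ord ?ltn_ord // nth_ord_enum.
  have sin : s \in injseqs (filter (fun x => ~~ eqn x v) (iota 0 k.+1)) h.
    apply: mem_injseqs; last by rewrite size_map size_enum_ord.
      rewrite map_inj_uniq ?enum_uniq // => i j /val_inj /val_inj; exact: finj.
    apply/allP=> x /mapP[i _ ->].
    have : val (val (f i)) \in filter (fun x => ~~ eqn x v) (iota 0 k.+1); last by [].
    rewrite mem_filter iota_ord andbT.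
    apply/negP => /eqnP /val_inj fv; move: vS; rewrite -fv; by rewrite (valP (f i)).
  move/negP: (chk s sin); apply.
  apply/allP=> i; rewrite mem_iota add0n => /andP[_ ih].
    apply/allP=> j; rewrite mem_iota add0n => /andP[_ jh].
    have -> : i = val (Ordinal ih) by [].
    have -> : j = val (Ordinal jh) by [].
    rewrite !nths -aE -eE beqE; apply/eqP; exact: (fadj _ _).
Qed.

Lemma in_FH_fixed h (a : rel 'I_h) (as_ : symmetric a) (ai : irreflexive a) k (e : rel 'I_k.+1)
   (es : symmetric e) (ei : irreflexive e) (aN eN : rel nat)
   (nbf : nat -> pred nat) (Ff : nat -> rel nat) cands :
  (forall i j : 'I_h, a i j = aN i j) -> (forall x y : 'I_k.+1, e x y = eN x y) ->
  notprobeN h k.+1 aN eN cands ->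
  all (fun v => minimalN h k.+1 aN eN v (nbf v) (Ff v)) (iota 0 k.+1) ->
  in_FH (SGraph as_ ai) (SGraph es ei).
Proof.
move=> aE eE np /allP mc; split; first exact: (notprobe_fixed aE eE np).
move=> S /properP[_ [v _ vS]]; have := minimal_fixed as_ ai aE eE vS (mc v (iota_ord v)). exact.
Qed.


Definition erelN (E : seq (nat * nat)) : rel nat :=
  fun i j => has (fun p => eqn p.1 i && eqn p.2 j || eqn p.1 j && eqn p.2 i) E.
Definition erel k (E : seq (nat * nat)) : rel 'I_k := fun i j => erelN E i j.

Lemma erel_sym k E : symmetric (@erel k E).
Proof. by move=> i j; rewrite /erel /erelN; apply: eq_has => p; rewrite orbC. Qed.

Lemma erel_irr k E : all (fun p => p.1 != p.2) E -> irreflexive (@erel k E).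
Proof.
move=> /allP H i; rewrite /erel /erelN; apply/hasP=> [[p /H]].
by case: p => a b /= ab; rewrite orbb => /andP[/eqnP ai /eqnP bi]; rewrite ai bi eqxx in ab.
Qed.

Definition nbP (P : seq (nat * nat)) : pred nat :=
  fun x => has (fun p => eqn p.1 x || eqn p.2 x) P.

Definition twoP2N : rel nat := fun i j => ~~ eqn i j && eqn i./2 j./2.
Definition p5N : rel nat := fun i j => eqn j i.+1 || eqn i j.+1.

Lemma twoP2E (i j : 'I_4) : twoP2_rel i j = twoP2N i j. Proof. by []. Qed.
Lemma p5E (i j : 'I_5) : p5_rel i j = p5N i j. Proof. by []. Qed.

Definition E3 := [:: (0, 3); (0, 4); (0, 5); (1, 3); (1, 4); (1, 6); (2, 5); (2, 6); (3, 5); (4, 6)].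
Definition P3 := [:: [::(2,3)]; [::(2,3)]; [::]; [::(0,1)]; [::(0,1)]; [::(0,2)]; [::(1,2)]].
Definition G3 : sgraph := SGraph (@erel_sym 7 E3) (@erel_irr 7 E3 (erefl true)).

Definition C3 := [:: [:: 3;5;2;6;4]; [:: 2;6;4;0;3]; [:: 0;5;2;6;1]; [:: 0;3;1;6;2]].
Lemma G3np : notprobeN 5 7 p5N (erelN E3) C3. Proof. by vm_compute. Qed.
Lemma G3mi : all (fun v => minimalN 5 7 p5N (erelN E3) v (nbP (nth [::] P3 v)) (erelN (nth [::] P3 v))) (iota 0 7).
Proof. by vm_compute. Qed.
Lemma G3_in : in_FH P5 G3.
Proof. exact: (@in_FH_fixed 5 _ _ _ 6 _ _ _ p5N (erelN E3) _ _ _ p5E (fun _ _ => erefl _) G3np G3mi). Qed.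

Definition EK := [:: (0,1); (2,3); (2,4); (3,4)].
Definition PK := [:: [::]; [::]; [::(0,3)]; [::(0,2)]; [::(0,2)]].
Definition GK : sgraph := SGraph (@erel_sym 5 EK) (@erel_irr 5 EK (erefl true)).

Definition CK := [:: [:: 0;1;2;3]; [:: 0;1;2;4]; [:: 0;1;3;4]].
Lemma GKnp : notprobeN 4 5 twoP2N (erelN EK) CK. Proof. by vm_compute. Qed.
Lemma GKmi : all (fun v => minimalN 4 5 twoP2N (erelN EK) v (nbP (nth [::] PK v)) (erelN (nth [::] PK v))) (iota 0 5).
Proof. by vm_compute. Qed.
Lemma GK_in : in_FH twoP2 GK.
Proof. exact: (@in_FH_fixed 4 _ _ _ 4 _ _ _ twoP2N (erelN EK) _ _ _ twoP2E (fun _ _ => erefl _) GKnp GKmi). Qed.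


Definition cw n (n0 : 0 < n) (m : nat) : 'I_n := Ordinal (ltn_pmod m n0).

Lemma cw_rel n (n0 : 0 < n) c i j : i < n -> j < n ->
  cycle_rel n (cw n0 (c + i)) (cw n0 (c + j)) = (i != j) && ((j == i.+1 %% n) || (i == j.+1 %% n)).
Proof.
move=> inn jn; rewrite /cycle_rel /=.
have S x y : y < n -> ((c + y) %% n == ((c + x) %% n).+1 %% n) = (y == x.+1 %% n).
  move=> yn; rewrite -addn1 modnDml addn1 -addnS eqn_modDl (modn_small yn) //.
rewrite S // S //; congr (_ && _).
by rewrite -val_eqE /= eqn_modDl !modn_small.
Qed.

Lemma cw_smallA n (n0 : 0 < n) c i j : 7 <= n -> i <= 5 -> j <= 5 ->
  cycle_rel n (cw n0 (c + i)) (cw n0 (c + j)) = (j == i.+1) || (i == j.+1).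
Proof.
move=> n7 i5 j5; rewrite cw_rel; try lia.
rewrite !modn_small; try lia.
Qed.

Lemma cw_smallB n (n0 : 0 < n) c i j : 7 <= n -> 0 < i <= 6 -> 0 < j <= 6 ->
  cycle_rel n (cw n0 (c + i)) (cw n0 (c + j)) = (j == i.+1) || (i == j.+1).
Proof.
move=> n7 i6 j6.
have -> : c + i = c.+1 + i.-1 by lia.
have -> : c + j = c.+1 + j.-1 by lia.
rewrite cw_smallA //; try lia.
Qed.

Lemma cw_inj n (n0 : 0 < n) c i j : i < n -> j < n -> cw n0 (c + i) = cw n0 (c + j) -> i = j.
Proof.
move=> inn jn /(congr1 val) /= /eqP; rewrite eqn_modDl !modn_small // => /eqP //.
Qed.

Lemma cyc_consec n (n0 : 0 < n) (N : {set 'I_n}) : 7 <= n -> odd n ->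
  (forall x y, x \in N -> y \in N -> ~~ cycle_rel n x y) ->
  exists c, cw n0 (c + 1) \notin N /\ cw n0 (c + 2) \notin N.
Proof.
move=> n7 no Ni.
pose b m := cw n0 m \in N.
case: (boolP [exists c : 'I_n, (cw n0 (c + 1) \notin N) && (cw n0 (c + 2) \notin N)]).
  by case/existsP=> c /andP[h1 h2]; exists c.
move=> /existsPn H.
have H2 m : b m.+2 = ~~ b m.+1.
  have e1 : cw n0 m.+1 = cw n0 ((m %% n) + 1).
    by apply: val_inj; rewrite /= modnDml addn1.
  have e2 : cw n0 m.+2 = cw n0 ((m %% n) + 2).
    by apply: val_inj; rewrite /= modnDml addn2.
  have := H (Ordinal (ltn_pmod m n0)); rewrite /b e1 e2 /=.
  have adj := @cw_smallA n n0 (m %% n) 1 2 n7 isT isT.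
  case h1: (_ \in N); case h2: (_ \in N) => //= _.
  by move: (Ni _ _ h1 h2); rewrite adj.
have Hb t : b t.+1 = b 1 (+) odd t.
  elim: t => [|t IH]; first by rewrite addbF.
  by rewrite H2 IH /= addbN.
have := Hb n; rewrite no addbT.
have -> : b n.+1 = b 1.
  by rewrite /b; congr (_ \in N); apply: val_inj; rewrite /= -addn1 modnDl.
by case: (b 1).
Qed.

Lemma Fl (V : finType) (N : {set V}) (F : rel V) x :
  (forall x y, F x y -> [/\ x \in N, y \in N & x != y]) -> x \notin N -> forall y, F x y = false.
Proof. by move=> FN xN y; apply/negP => /FN [h _ _]; rewrite h in xN. Qed.

Lemma Fr (V : finType) (N : {set V}) (F : rel V) y :
  (forall x y, F x y -> [/\ x \in N, y \in N & x != y]) -> y \notin N -> forall x, F x y = false.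
Proof. by move=> FN yN x; apply/negP => /FN [_ h _]; rewrite h in yN. Qed.

Lemma Firr (V : finType) (N : {set V}) (F : rel V) :
  (forall x y, F x y -> [/\ x \in N, y \in N & x != y]) -> forall x, F x x = false.
Proof. by move=> FN x; apply/negP => /FN [_ _]; rewrite eqxx. Qed.

Lemma cyc_not_probe_2P2 n : 7 <= n -> odd n -> ~ probe_free twoP2 'I_n (cycle_rel n).
Proof.
move=> n7 no [N [F [Ni [Fs [FN Hf]]]]].
have n0 : 0 < n by lia.
have [c [c1 c2]] := cyc_consec n0 n7 no Ni.
apply: Hf; exists (fun i : 'I_4 => cw n0 (c + nth 0 [:: 1; 2; 4; 5] i)); split.
  move=> i j H; apply: val_inj; move: H => /(congr1 val) /= /eqP.
  rewrite eqn_modDl !modn_small;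
  case: i j => [[|[|[|[|i]]]] Hi] [[|[|[|[|j]]]] Hj] /=; lia.
have F1 := Fl FN c1; have F2 := Fl FN c2; have F1' := Fr FN c1; have F2' := Fr FN c2.
have Fi := Firr FN.
move=> [[|[|[|[|i]]]] Hi] [[|[|[|[|j]]]] Hj] //=; try rewrite cw_smallA //=;
  by rewrite ?F1 ?F2 ?F1' ?F2' ?Fi.
Qed.

Lemma inj_from n (n0 : 0 < n) c h (ks : seq nat) :
  7 <= n -> size ks = h -> uniq ks -> all (fun k => k <= 6) ks ->
  injective (fun i : 'I_h => cw n0 (c + nth 0 ks i)).
Proof.
move=> n7 sz uk k6.
have B (i : 'I_h) : nth 0 ks i < n.
  have : nth 0 ks i \in ks by apply: mem_nth; rewrite sz.
  move/(allP k6) => /= ?; lia.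
move=> i j /(congr1 val) /= /eqP; rewrite eqn_modDl !modn_small //.
rewrite nth_uniq ?sz // => /eqP ij; exact: val_inj.
Qed.

Ltac inj5 := apply: inj_from => //.

Lemma cyc_not_probe_P5 n : 7 <= n -> odd n -> ~ probe_free P5 'I_n (cycle_rel n).
Proof.
move=> n7 no [N [F [Ni [Fs [FN Hf]]]]].
have n0 : 0 < n by lia.
have [c [c1 c2]] := cyc_consec n0 n7 no Ni.
apply: Hf.
have F1 := Fl FN c1; have F2 := Fl FN c2; have F1' := Fr FN c1; have F2' := Fr FN c2.
have Fi := Firr FN.
case p0: (cw n0 (c + 0) \in N); last first.
  have p0' : cw n0 (c + 0) \notin N by rewrite p0.
  have F0 := Fl FN p0'; have F0' := Fr FN p0'.
  exists (fun i : 'I_5 => cw n0 (c + nth 0 [:: 0; 1; 2; 3; 4] i)); split; first inj5.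
  move=> [[|[|[|[|[|i]]]]] Hi] [[|[|[|[|[|j]]]]] Hj] //=; try rewrite cw_smallA //=;
  by rewrite ?F0 ?F0' ?F1 ?F1' ?F2 ?F2' ?Fi.
case q3: (cw n0 (c + 3) \in N); last first.
  have q3' : cw n0 (c + 3) \notin N by rewrite q3.
  have F3 := Fl FN q3'; have F3' := Fr FN q3'.
  exists (fun i : 'I_5 => cw n0 (c + nth 0 [:: 1; 2; 3; 4; 5] i)); split; first inj5.
  move=> [[|[|[|[|[|i]]]]] Hi] [[|[|[|[|[|j]]]]] Hj] //=; try rewrite cw_smallA //=;
  by rewrite ?F3 ?F3' ?F1 ?F1' ?F2 ?F2' ?Fi.
have c4 : cw n0 (c + 4) \notin N.
  by apply/negP => h; move: (Ni _ _ q3 h); rewrite cw_smallA.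
have F4 := Fl FN c4; have F4' := Fr FN c4.
case Fpq: (F (cw n0 (c + 0)) (cw n0 (c + 3))); last first.
  have Fqp : F (cw n0 (c + 3)) (cw n0 (c + 0)) = false by rewrite Fs.
  exists (fun i : 'I_5 => cw n0 (c + nth 0 [:: 0; 1; 2; 3; 4] i)); split; first inj5.
  move=> [[|[|[|[|[|i]]]]] Hi] [[|[|[|[|[|j]]]]] Hj] //=; try rewrite cw_smallA //=;
  by rewrite ?Fpq ?Fqp ?F4 ?F4' ?F1 ?F1' ?F2 ?F2' ?Fi.
have Fqp : F (cw n0 (c + 3)) (cw n0 (c + 0)) = true by rewrite Fs.
case r5: (cw n0 (c + 5) \in N); last first.
  have r5' : cw n0 (c + 5) \notin N by rewrite r5.
  have F5 := Fl FN r5'; have F5' := Fr FN r5'.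
  exists (fun i : 'I_5 => cw n0 (c + nth 0 [:: 1; 0; 3; 4; 5] i)); split; first inj5.
  move=> [[|[|[|[|[|i]]]]] Hi] [[|[|[|[|[|j]]]]] Hj] //=; try rewrite cw_smallA //=;
  by rewrite ?Fpq ?Fqp ?F5 ?F5' ?F4 ?F4' ?F1 ?F1' ?F2 ?F2' ?Fi.
have c6 : cw n0 (c + 6) \notin N.
  by apply/negP => h; move: (Ni _ _ r5 h); rewrite cw_smallB.
have F6 := Fl FN c6; have F6' := Fr FN c6.
case Fqr: (F (cw n0 (c + 3)) (cw n0 (c + 5))).
  have Frq : F (cw n0 (c + 5)) (cw n0 (c + 3)) = true by rewrite Fs.
  exists (fun i : 'I_5 => cw n0 (c + nth 0 [:: 1; 2; 3; 5; 6] i)); split; first inj5.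
  move=> [[|[|[|[|[|i]]]]] Hi] [[|[|[|[|[|j]]]]] Hj] //=; try rewrite cw_smallB //=;
  by rewrite ?Fqr ?Frq ?F6 ?F6' ?F1 ?F1' ?F2 ?F2' ?Fi.
have Frq : F (cw n0 (c + 5)) (cw n0 (c + 3)) = false by rewrite Fs.
exists (fun i : 'I_5 => cw n0 (c + nth 0 [:: 1; 2; 3; 4; 5] i)); split; first inj5.
move=> [[|[|[|[|[|i]]]]] Hi] [[|[|[|[|[|j]]]]] Hj] //=; try rewrite cw_smallA //=;
by rewrite ?Fqr ?Frq ?F4 ?F4' ?F1 ?F1' ?F2 ?F2' ?Fi.
Qed.


Definition inN (v x : nat) := if v < x then odd (x - v) else (x < v) && ~~ odd (v - x).

Lemma inN_step n v a : odd n -> v < n -> a < n -> a != v -> a.+1 %% n != v ->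
  inN v a != inN v (a.+1 %% n).
Proof.
move=> no vn an av bv.
case: (ltngtP a.+1 n) => h; [| lia |].
- rewrite modn_small // in bv *.
  rewrite /inN; case: (ltngtP v a) => va.
  + have -> : v < a.+1 by lia.
    have -> : a.+1 - v = (a - v).+1 by lia.
    by rewrite oddS; case: (odd _).
  + have -> : (v < a.+1) = false by lia.
    have -> : (a.+1 < v) = true by lia.
    have -> : v - a = (v - a.+1).+1 by lia.
    by rewrite oddS /=; case: (odd _).
  + by rewrite va eqxx in av.
- rewrite h modnn in bv *.
  have v0 : 0 < v by lia.
  have va : v < a by lia.
  rewrite /inN va v0 /= subn0 oddB; last by lia.
  have : odd a = false by move: no; rewrite -h oddS; case: (odd a).
  by move=> ->; case: (odd v).
Qed.

Lemma inN_adj n (v x y : 'I_n) : odd n -> x != v -> y != v -> cycle_rel n x y ->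
  inN v x != inN v y.
Proof.
move=> no xv yv /andP[_ /orP[/eqP Hy | /eqP Hx]].
  rewrite Hy; apply: inN_step => //; rewrite -?Hy //.
rewrite eq_sym Hx; apply: inN_step => //; rewrite -?Hx //.
Qed.

Lemma cover_free (V : finType) (e : rel V) (C : pred V) :
  (forall x y, e x y -> C x || C y) -> (forall x y, C x -> C y -> x != y -> e x y) ->
  H_free twoP2 V e.
Proof.
move=> cov cl [f [finj fadj]].
pose o0 := @Ordinal 4 0 isT. pose o1 := @Ordinal 4 1 isT.
pose o2 := @Ordinal 4 2 isT. pose o3 := @Ordinal 4 3 isT.
have e01 : e (f o0) (f o1) by rewrite -fadj.
have e23 : e (f o2) (f o3) by rewrite -fadj.
have ne i j : i \in [:: o0; o1] -> j \in [:: o2; o3] -> C (f i) -> C (f j) -> False.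
  move=> hi hj ci cj; have := cl _ _ ci cj; rewrite (inj_eq finj) -fadj.
  move: hi hj; rewrite !inE => /orP[] /eqP -> /orP[] /eqP ->; by rewrite /o0 /o1 /o2 /o3 => /(_ isT).
case/orP: (cov _ _ e01) => c1; case/orP: (cov _ _ e23) => c2; apply: (ne _ _ _ _ c1 c2);
  by rewrite !inE eqxx ?orbT.
Qed.

Lemma free2_P5 (V : finType) (e : rel V) : H_free twoP2 V e -> H_free P5 V e.
Proof.
move=> H2 [f [finj fadj]]; apply: H2.
exists (fun i : 'I_4 => f (lift (@Ordinal 5 2 isT) i)); split.
  by move=> i j /finj /lift_inj.
move=> i j; rewrite -fadj.
by case: i j => [[|[|[|[|i]]]] Hi] [[|[|[|[|j]]]] Hj].
Qed.

Lemma probe2_P5 (V : finType) (e : rel V) : probe_free twoP2 V e -> probe_free P5 V e.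
Proof.
move=> [N [F [h1 [h2 [h3 h4]]]]]; exists N, F; do 3!split => //; exact: free2_P5.
Qed.

Lemma cyc_sub_probe n (S : {set 'I_n}) (v : 'I_n) : odd n -> v \notin S ->
  probe_free twoP2 {x : 'I_n | x \in S} (@sub_rel 'I_n (cycle_rel n) S).
Proof.
move=> no vS.
pose C (x : {x : 'I_n | x \in S}) := inN v (val (val x)).
have nv (x : {x : 'I_n | x \in S}) : val x != v.
  by apply: contraNneq vS => <-; exact: valP.
have key (x y : {x : 'I_n | x \in S}) : cycle_rel n (val x) (val y) -> C x != C y.
  by move=> cxy; apply: inN_adj.
exists [set x | C x], (fun x y => (x != y) && C x && C y).
split; [|split; [|split]].
- move=> x y; rewrite !inE => cx cy; apply/negP => /key; by rewrite cx cy.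
- move=> x y /=; rewrite eq_sym; case: (C x); case: (C y); by rewrite ?andbF ?andbT.
- move=> x y /andP[/andP[xy cx] cy]; by rewrite !inE cx cy.
- apply: (@cover_free _ _ C).
    move=> x y /orP[/key|/andP[/andP[_ ->] //]].
    by case: (C x); case: (C y).
  by move=> x y cx cy xy; rewrite xy cx cy orbT.
Qed.

Lemma cyc_in_2P2 n : 7 <= n -> odd n -> in_FH twoP2 (cycle_graph n).
Proof.
move=> n7 no; split; first exact: cyc_not_probe_2P2.
move=> S /properP[_ [v _ vS]]; have := cyc_sub_probe no vS; exact.
Qed.

Lemma cyc_in_P5 n : 7 <= n -> odd n -> in_FH P5 (cycle_graph n).
Proof.
move=> n7 no; split; first exact: cyc_not_probe_P5.
move=> S /properP[_ [v _ vS]]; have := probe2_P5 (cyc_sub_probe no vS); exact.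
Qed.


Lemma no_tri (x y z : 'I_7) : cycle_rel 7 x y -> cycle_rel 7 y z -> cycle_rel 7 x z -> False.
Proof.
by case: x y z => [[|[|[|[|[|[|[|x]]]]]]] Hx] [[|[|[|[|[|[|[|y]]]]]]] Hy] [[|[|[|[|[|[|[|z]]]]]]] Hz].
Qed.

Theorem mainTheorem11 :
  ((forall n, 7 <= n -> odd n -> in_FH twoP2 (cycle_graph n)) /\
   (exists G, in_FH twoP2 G /\
      forall n, 7 <= n -> odd n -> ~ isomorphic G (cycle_graph n))) /\
  ((forall n, 7 <= n -> odd n -> in_FH P5 (cycle_graph n)) /\
   (exists G, in_FH P5 G /\
      forall n, 7 <= n -> odd n -> ~ isomorphic G (cycle_graph n))) /\
  (forall N, exists G, in_FH twoP2 G /\ N < #|vert G|) /\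
  (forall N, exists G, in_FH P5 G /\ N < #|vert G|).
Proof.
have oddN N : odd (7 + N.*2) by rewrite oddD odd_double.
split; [split|split; [split|split]].
- exact: cyc_in_2P2.
- exists GK; split; first exact: GK_in.
  move=> n n7 no [f [fb _]]; have := bij_eq_card fb; rewrite /= !card_ord; lia.
- exact: cyc_in_P5.
- exists G3; split; first exact: G3_in.
  move=> n n7 no [f [fb fadj]]; have := bij_eq_card fb; rewrite /= !card_ord => n7'.
  subst n.
  have h1 := fadj (@Ordinal 7 0 isT) (@Ordinal 7 3 isT).
  have h2 := fadj (@Ordinal 7 3 isT) (@Ordinal 7 5 isT).
  have h3 := fadj (@Ordinal 7 0 isT) (@Ordinal 7 5 isT).
  by apply: (no_tri (esym h1) (esym h2) (esym h3)).
- move=> N; exists (cycle_graph (7 + N.*2)); split; first by apply: cyc_in_2P2 => //; lia.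
  rewrite /= card_ord; lia.
- move=> N; exists (cycle_graph (7 + N.*2)); split; first by apply: cyc_in_P5 => //; lia.
  rewrite /= card_ord; lia.
Qed.
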